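(* Let $(E,p,X)$ and $(F,q,Y)$ be étalé spaces over Boolean spaces and let $\varphi\colon(E,p,X)\to(F,q,Y)$ be a proper continuous relational covering morphism with underlying map $\overline{\varphi}\colon X\to Y$. Then $\overline{\varphi}$ is a proper continuous map of topological spaces.
   Context: A Boolean space is a Hausdorff space with a basis of compact-open sets. An étalé space $(E,p,X)$: topological spaces $E,X$ with a surjective local homeomorphism $p\colon E\to X$. Stalk: $F_y=q^{-1}(y)$. A relational morphism $\varphi\colon(E,p,X)\to(F,q,Y)$ is a map $\varphi\colon E\to\mathsf P(F)$ together with a map $\overline{\varphi}\colon X\to Y$ such that $\varphi(e)\subseteq F_{\overline{\varphi}(p(e))}$ for all $e\in E$. It is locally injective if $p(e)=p(e')$ and $\varphi(e)\cap\varphi(e')\neq\emptyset$ imply $e=e'$; locally surjective if whenever $y\in F$ with $q(y)=\overline{\varphi}(u)$ for some $u\in X$, there is $e\in E$ with $p(e)=u$ and $y\in\varphi(e)$; a relational covering morphism if both. With $\varphi^{-1}(A)=\{e\in E:\varphi(e)\cap A\neq\emptyset\}$, $\varphi$ is continuous if $\varphi^{-1}(A)$ is open for all open $A\subseteq F$ and proper if $\varphi^{-1}(K)$ is compact for all compact $K\subseteq F$. A continuous map is proper if inverse images of compact sets are compact. *)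

(* Defs.v *)
From HB Require Import structures.
From mathcomp Require Import all_boot all_order.
From mathcomp Require Import all_classical topology.
Set Implicit Arguments. Unset Strict Implicit. Unset Printing Implicit Defensive.
Local Open Scope classical_set_scope.

Definition boolean_space (T : topologicalType) : Prop :=
  hausdorff_space T /\
  (forall (U : set T) (x : T), open U -> U x ->
     exists K : set T, [/\ compact K, open K, K x & K `<=` U]).

(** Local homeomorphism: continuous, and every point has an open neighbourhood
    mapped injectively onto an open set, with the restriction a homeomorphism
    onto its (open) image, i.e. it maps open subsets of U to open sets. *)
Definition local_homeomorphism (E X : topologicalType) (p : E -> X) : Prop :=
  continuous p /\
  forall e : E, exists U : set E,
    [/\ open U, U e, open (p @` U), {in U &, injective p}
      & forall V : set E, open V -> V `<=` U -> open (p @` V)].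

Definition etale (E X : topologicalType) (p : E -> X) : Prop :=
  (forall x : X, exists e : E, p e = x) /\ local_homeomorphism p.

Definition relational_morphism (E X F Y : Type) (p : E -> X) (q : F -> Y)
  (phi : E -> set F) (phib : X -> Y) : Prop :=
  forall e : E, phi e `<=` q @^-1` [set phib (p e)].

Definition rel_locally_injective (E X F : Type) (p : E -> X)
  (phi : E -> set F) : Prop :=
  forall e e' : E, p e = p e' -> phi e `&` phi e' !=set0 -> e = e'.

Definition rel_locally_surjective (E X F Y : Type) (p : E -> X) (q : F -> Y)
  (phi : E -> set F) (phib : X -> Y) : Prop :=
  forall (y : F) (u : X), q y = phib u -> exists e : E, p e = u /\ phi e y.

Definition rel_covering_morphism (E X F Y : Type) (p : E -> X) (q : F -> Y)
  (phi : E -> set F) (phib : X -> Y) : Prop :=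
  [/\ relational_morphism p q phi phib, rel_locally_injective p phi
    & rel_locally_surjective p q phi phib].

Definition rel_preimage (E F : Type) (phi : E -> set F) (A : set F) : set E :=
  [set e | phi e `&` A !=set0].

Definition rel_continuous (E F : topologicalType) (phi : E -> set F) : Prop :=
  forall A : set F, open A -> open (rel_preimage phi A).

Definition rel_proper (E F : topologicalType) (phi : E -> set F) : Prop :=
  forall K : set F, compact K -> compact (rel_preimage phi K).

Definition proper_map (X Y : topologicalType) (f : X -> Y) : Prop :=
  forall K : set Y, compact K -> compact (f @^-1` K).

(* Main.v *)
Require Import Defs.
From HB Require Import structures.
From mathcomp Require Import all_boot all_order.
From mathcomp Require Import all_classical topology.
From mathcomp Require Import finmap.
Local Open Scope classical_set_scope.

Definition ptT (T : topologicalType) (t : T) : Type := T.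
HB.instance Definition _ (T : topologicalType) (t : T) := Topological.on (ptT T t).
HB.instance Definition _ (T : topologicalType) (t : T) := isPointed.Build (ptT T t) t.

Lemma compact_cover_gen (T : topologicalType) (A : set T) :
  compact A -> cover_compact A.
Proof.
move=> cA I D f fo Ac.
case: (pselect (A !=set0)) => [[t At]|nA]; last first.
  by exists fset0 => // x Ax; exfalso; apply: nA; exists x.
have := @compact_cover (ptT T t).
move=> e. have : @cover_compact (ptT T t) A by rewrite -e.
by move/(_ I D f fo Ac).
Qed.

Lemma lh_open (E X : topologicalType) (p : E -> X) :
  local_homeomorphism p -> forall W, open W -> open (p @` W).
Proof.
move=> [_ lh] W oW; rewrite openE => _ [e We <-].
have [U [oU Ue _ _ opV]] := lh e.
rewrite /interior.
apply: (@filterS _ _ _ (p @` (W `&` U))).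
  by move=> _ [z [Wz _] <-]; exists z.
apply: open_nbhs_nbhs; split; last by exists e.
apply: opV; [exact: openI | exact: subIsetr].
Qed.

Lemma bigsetU_seqP (I : eqType) (T : Type) (s : seq I) (F : I -> set T) x :
  (\big[setU/set0]_(i <- s) F i) x <-> exists2 i, i \in s & F i x.
Proof.
elim: s => [|a s IH]; first by rewrite big_nil; split => // -[].
rewrite big_cons; split.
  case=> [Fa|/IH [i si Fi]]; first by exists a => //; rewrite inE eqxx.
  by exists i => //; rewrite inE si orbT.
move=> [i]; rewrite inE => /orP [/eqP -> Fa|si Fi]; first by left.
by right; apply/IH; exists i.
Qed.

Theorem lemma1p12 (E X F Y : topologicalType) (p : E -> X) (q : F -> Y)
  (phi : E -> set F) (phib : X -> Y) :
  boolean_space X -> boolean_space Y ->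
  etale p -> etale q ->
  rel_covering_morphism p q phi phib ->
  rel_continuous phi -> rel_proper phi ->
  continuous phib /\ proper_map phib.
Proof.
move=> boolX [hausY boolY] [psurj plh] [qsurj qlh] [morph _ lsurj] rcont rprop.
have pop := @lh_open _ _ p plh.
have key : forall V, phib @^-1` V = p @` rel_preimage phi (q @^-1` V).
  move=> V; apply/seteqP; split.
    move=> x Vx; have [f qf] := qsurj (phib x).
    have [e [pe phie]] := lsurj f x qf.
    by exists e => //; exists f; split => //; rewrite /= qf.
  move=> _ [e [f [phief Vqf]] <-].
  by have := morph e f phief; rewrite /= => <-.
have pcont : continuous p by case: plh.
have qcont : continuous q by case: qlh.
split.
  apply/continuousP => V oV; rewrite key; apply: pop; apply: rcont.
  exact: (continuousP _).1 qcont _ oV.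
move=> K cK.
have Kcl : closed K by exact: compact_closed.
have loc : forall y : Y, exists UK : set F * set Y,
   [/\ open UK.1, {in UK.1 &, injective q},
       (forall V, open V -> V `<=` UK.1 -> open (q @` V)),
       compact UK.2 /\ open UK.2 & UK.2 y /\ UK.2 `<=` q @` UK.1].
  move=> y; have [f qf] := qsurj y.
  have [U [oU Uf oqU inj opV]] := qlh.2 f.
  have [K' [cK' oK' K'y sK']] := boolY (q @` U) y oqU (ex_intro2 _ _ f Uf qf).
  by exists (U, K').
have [g gP] := choice loc.
pose C y := (g y).1 `&` q @^-1` (K `&` (g y).2).
have Cc : forall y, compact (C y).
  move=> y; have [oU inj opV [cK' oK'] [K'y sK']] := gP y.
  have [f1 Uf1 _] := sK' y K'y.
  have hex : forall z : Y, exists f0 : F, (q @` (g y).1) z -> (g y).1 f0 /\ q f0 = z.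
    move=> z; case: (pselect ((q @` (g y).1) z)) => [[f0 Uf0 qf0]|n].
      by exists f0.
    by exists f1.
  have [h hP] := choice hex.
  have Ceq : C y = h @` (K `&` (g y).2).
    apply/seteqP; split.
      move=> c [Uc [Kqc K'qc]]; exists (q c) => //.
      have [Uh qh] := hP (q c) (ex_intro2 _ _ c Uc erefl).
      apply: inj; rewrite ?inE//=; [exact: mem_set|exact: mem_set].
    move=> _ [z [Kz K'z] <-]; have [Uh qh] := hP z (sK' z K'z).
    by split => //; rewrite /= qh.
  rewrite Ceq; apply: continuous_compact; last first.
    by apply: compact_closedI => //; exact: compact_closed.
  apply: (@continuous_subspaceW _ _ _ (q @` (g y).1)).
    by move=> z [_ /sK'].
  rewrite continuous_open_subspace; last by apply: opV.
  move=> z /set_mem qUz.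
  have [Uhz qhz] := hP z qUz.
  move=> B nB; rewrite nbhs_simpl /=.
  have [O [[oO Ohz] OB]] : exists O, open_nbhs (h z) O /\ O `<=` B.
    by move: nB; rewrite nbhsE => -[O0 ? ?]; exists O0.
  apply: (@filterS _ _ _ (q @` (O `&` (g y).1))).
    move=> _ [v [Ov Uv] <-].
    have [Uhw qhw] := hP (q v) (ex_intro2 _ _ v Uv erefl).
    have hv : h (q v) = v by apply: inj; [exact: mem_set|exact: mem_set|]. rewrite /= hv.
    exact: OB.
  apply: open_nbhs_nbhs; split.
    by apply: opV; [exact: openI | exact: subIsetr].
  by exists (h z).
have gO : forall y, open (g y).2 by move=> y; have [_ _ _ [_ ?] _] := gP y.
have gI : forall y, (g y).2 y by move=> y; have [_ _ _ _ [? _]] := gP y.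
have [D' sD' Kc] := @compact_cover_gen _ K cK Y K (fun y => (g y).2)
   (fun y _ => gO y)
   (fun y Ky => @ex_intro2 _ K (fun i => (g i).2 y) y Ky (gI y)).
have -> : phib @^-1` K =
    \big[setU/set0]_(y <- D') (p @` rel_preimage phi (C y)).
  apply/seteqP; split.
    move=> x Kx; have [y D'y K'y] := Kc _ Kx.
    have [_ _ _ _ [_ sK']] := gP y.
    have [f Uf qf] := sK' _ K'y.
    have [e [pe phie]] := lsurj f x qf.
    apply/bigsetU_seqP; exists y => //.
    exists e => //; exists f; split => //; split => //.
    by rewrite /= qf.
  move=> x /bigsetU_seqP [y _ [e [f [phief [Uf [Kqf _]]]] <-]].
  by have := morph e f phief; rewrite /= => <-.
apply: bigsetU_compact => y _.
apply: continuous_compact; first exact: continuous_subspaceT.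
exact: (rprop (C y) (Cc y)).
Qed.
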